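(* Let $P$ be a generic regular pentagon in $\mathbb{R}^3$ and $u_1,\ldots,u_5$ a support system of $P$. Then the derived pentagon $P'=B_1\ldots B_5$ is a plane pentagon (all five vertices are coplanar) with oriented area $0$.
   Context: For a closed polygon $P=A_1\ldots A_n$ in $\mathbb{R}^3$ put $v_1=\overline{A_1A_2},\ldots,v_n=\overline{A_nA_1}$, indices cyclic mod $n$. $P$ is generic if any two consecutive $v_i,v_{i+1}$ are not collinear and any three consecutive $v_i,v_{i+1},v_{i+2}$ are not coplanar. A support system of $P$ is a tuple $u_1,\ldots,u_n$ with $[u_i,u_{i+1}]=v_{i+1}$ for all $i$ (cyclically; $[\cdot,\cdot]$ is the cross product). A generic polygon is regular if it has a support system. Given a support system, fix an origin $O$ and let $B_i$ be the point with $\overline{OB_i}=u_i$; the polygon $P'=B_1\ldots B_n$ is the derived polygon of $P$. A closed polygon $B_1\ldots B_n$ has oriented area $0$ if $\sum_{i=1}^n[\overline{OB_i},\overline{OB_{i+1}}]=0$ (independent of $O$); for a plane polygon this means its signed area in its plane is zero. *)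

(* Defs.v *)
(* Points/vectors of R^3 are row vectors 'rV[R]_3 over a
   real field R; polygons with n vertices are maps 'I_n -> 'rV[R]_3,
   indices cyclic via ordS (i |-> i+1 mod n). Vertex A_{k+1} of the paper
   is A k here (0-based). *)
From mathcomp Require Import all_boot all_order all_algebra.
Set Implicit Arguments. Unset Strict Implicit. Unset Printing Implicit Defensive.
Import Order.TTheory GRing.Theory Num.Theory.
Local Open Scope ring_scope.

Section Defs.
Variable R : realFieldType.
Notation vec := 'rV[R]_3.

Definition crossp (a b : vec) : vec :=
  \row_(k < 3)
    (if k == 0 :> nat then a 0 1 * b 0 2 - a 0 2 * b 0 1
     else if k == 1 :> nat then a 0 2 * b 0 0 - a 0 0 * b 0 2
     else a 0 0 * b 0 1 - a 0 1 * b 0 0).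

Definition dotp (a b : vec) : R := \sum_(k < 3) a 0 k * b 0 k.

Definition collinear (a b : vec) : Prop := (\rank (col_mx a b) <= 1)%N.
Definition coplanar3 (a b c : vec) : Prop :=
  (\rank (col_mx a (col_mx b c)) <= 2)%N.

Definition sides n (A : 'I_n -> vec) (k : 'I_n) : vec := A (ordS k) - A k.

Definition generic n (A : 'I_n -> vec) : Prop :=
  forall k : 'I_n,
    ~ collinear (sides A k) (sides A (ordS k)) /\
    ~ coplanar3 (sides A k) (sides A (ordS k)) (sides A (ordS (ordS k))).

Definition support_system n (A : 'I_n -> vec) (u : 'I_n -> vec) : Prop :=
  forall k : 'I_n, crossp (u k) (u (ordS k)) = sides A (ordS k).

Definition regular n (A : 'I_n -> vec) : Prop :=
  generic A /\ exists u, support_system A u.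

(* derived polygon, origin O = 0: B_i = u_i *)
Definition derived n (u : 'I_n -> vec) : 'I_n -> vec := u.

Definition plane_polygon n (B : 'I_n -> vec) : Prop :=
  exists (nrm : vec) (c : R), nrm != 0 /\ forall k : 'I_n, dotp nrm (B k) = c.

Definition oriented_area_zero n (B : 'I_n -> vec) : Prop :=
  \sum_(k < n) crossp (B k) (B (ordS k)) = 0.

End Defs.

(* Main.v *)
Require Import Defs.
From mathcomp Require Import all_boot all_order all_algebra.
From mathcomp Require Import ring.
Set Implicit Arguments. Unset Strict Implicit. Unset Printing Implicit Defensive.
Import GRing.Theory.
Local Open Scope ring_scope.

Definition cf (R : realFieldType) (a : 'rV[R]_3) (n : nat) := a 0 (inord n).
Lemma coordE (R : realFieldType) (a : 'rV[R]_3) (k : 'I_3) : a 0 k = cf a k.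
Proof. by rewrite /cf inord_val. Qed.

Ltac expand := rewrite /dotp /crossp ?big_ord_recl ?big_ord0 ?mxE /=;
  rewrite ?big_ord0 ?mxE /= ?coordE /= /bump /=.

Lemma det33 (R : comNzRingType) (M : 'M[R]_3) : \det M =
  M 0 0 * (M 1 1 * M 2 2 - M 1 2 * M 2 1)
  - M 0 1 * (M 1 0 * M 2 2 - M 1 2 * M 2 0)
  + M 0 2 * (M 1 0 * M 2 1 - M 1 1 * M 2 0).
Proof.
rewrite (expand_det_row _ 0) !big_ord_recl big_ord0 /cofactor.
rewrite !(expand_det_row _ 0) !big_ord_recl !big_ord0 /cofactor !det_mx11 !mxE /=.
pose g (a b : nat) := M (inord a) (inord b).
have E : forall i j, M i j = g i j by move=> i j; rewrite /g !inord_val.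
rewrite !E /= /bump /=.
ring.
Qed.

Section S.
Variable R : realFieldType.
Notation vec := 'rV[R]_3.

Lemma key0 (a0 a1 a2 : vec) :
  dotp (crossp a1 a2 + crossp a2 a0 + crossp a0 a1) a0 = dotp a0 (crossp a1 a2).
Proof. expand. ring. Qed.
Lemma key3 (a0 a1 a2 a3 a4 : vec) :
  dotp (crossp a1 a2 + crossp a2 a0 + crossp a0 a1) a3 - dotp a0 (crossp a1 a2) =
  dotp (a3 - a0) (crossp a0 a1 + crossp a1 a2 + crossp a2 a3 + crossp a3 a4 + crossp a4 a0).
Proof. expand. ring. Qed.
Lemma key4 (a0 a1 a2 a3 a4 : vec) :
  dotp (crossp a1 a2 + crossp a2 a0 + crossp a0 a1) a4 - dotp a0 (crossp a1 a2) =
  dotp (a4 - a2) (crossp a0 a1 + crossp a1 a2 + crossp a2 a3 + crossp a3 a4 + crossp a4 a0).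
Proof. expand. ring. Qed.
End S.

Lemma colE (R : realFieldType) (a b c : 'rV[R]_3) (i j : 'I_3) :
  col_mx a (col_mx b c) i j = if (i == 0 :> nat) then a 0 j else if (i == 1 :> nat) then b 0 j else c 0 j.
Proof.
rewrite mxE; case: splitP => k Hk.
  by rewrite ord1 Hk ord1.
rewrite mxE; case: splitP => l Hl; rewrite !ord1 in Hl *; rewrite Hk /= Hl //.

Qed.
Lemma detcross (R : realFieldType) (a0 a1 a2 a3 : 'rV[R]_3) :
  \det (col_mx (crossp a0 a1) (col_mx (crossp a1 a2) (crossp a2 a3))) =
  dotp a0 (crossp a1 a2) * dotp a1 (crossp a2 a3).
Proof.
rewrite det33 !colE /=.
expand. ring.
Qed.
Lemma key1 (R : realFieldType) (a0 a1 a2 : 'rV[R]_3) :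
  dotp (crossp a1 a2 + crossp a2 a0 + crossp a0 a1) a1 = dotp a0 (crossp a1 a2).
Proof. expand. ring. Qed.
Lemma key2 (R : realFieldType) (a0 a1 a2 : 'rV[R]_3) :
  dotp (crossp a1 a2 + crossp a2 a0 + crossp a0 a1) a2 = dotp a0 (crossp a1 a2).
Proof. expand. ring. Qed.
Lemma dotp0 (R : realFieldType) (a : 'rV[R]_3) : dotp 0 a = 0.
Proof. expand. ring. Qed.
Lemma dotp0r (R : realFieldType) (a : 'rV[R]_3) : dotp a 0 = 0.
Proof. expand. ring. Qed.

Lemma sum5 (V : zmodType) (F : 'I_5 -> V) :
  \sum_(k < 5) F k = F (inord 0) + F (inord 1) + F (inord 2) + F (inord 3) + F (inord 4).
Proof.
rewrite !big_ord_recl big_ord0 addr0 !addrA.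
by congr (_ + _ + _ + _ + _); congr F; apply: val_inj; rewrite /= inordK.
Qed.

Lemma ordS5 (i : nat) : (i < 5)%N -> ordS (inord i : 'I_5) = inord (i.+1 %% 5).
Proof. move=> Hi; apply: val_inj; rewrite /= !inordK //. by rewrite ltn_mod. Qed.

Theorem theorem4p1 (R : realFieldType) (A u : 'I_5 -> 'rV[R]_3) :
  regular A -> support_system A u ->
  plane_polygon (derived u) /\ oriented_area_zero (derived u).
Proof.
move=> [Hgen _] Hu.
have Hs : \sum_(k < 5) sides A k = 0.
  by rewrite /sides sumrB [X in _ - X](reindex_inj (@ordS_inj _)) subrr.
have Harea : \sum_(k < 5) crossp (u k) (u (ordS k)) = 0.
  rewrite (eq_bigr (fun k => sides A (ordS k))); last by move=> k _; exact: Hu.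
  rewrite -[RHS]Hs; symmetry; exact: (reindex_inj (@ordS_inj _)).
split; last exact: Harea.
have S0 : ordS (inord 0 : 'I_5) = inord 1 by apply: val_inj; rewrite /= !inordK.
have S1 : ordS (inord 1 : 'I_5) = inord 2 by apply: val_inj; rewrite /= !inordK.
have S2 : ordS (inord 2 : 'I_5) = inord 3 by apply: val_inj; rewrite /= !inordK.
have S3 : ordS (inord 3 : 'I_5) = inord 4 by apply: val_inj; rewrite /= !inordK.
have S4 : ordS (inord 4 : 'I_5) = inord 0 by apply: val_inj; rewrite /= !inordK.
move: Harea; rewrite sum5 S0 S1 S2 S3 S4 => W.
set u0 := u (inord 0); set u1 := u (inord 1); set u2 := u (inord 2).
set u3 := u (inord 3); set u4 := u (inord 4).
have HD : dotp u0 (crossp u1 u2) != 0.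
  apply/eqP => D0.
  have [_ Hc] := Hgen (inord 1).
  have E1 : sides A (inord 1) = crossp u0 u1 by rewrite -S0 -Hu S0.
  have E2 : sides A (inord 2) = crossp u1 u2 by rewrite -S1 -Hu S1.
  have E3 : sides A (inord 3) = crossp u2 u3 by rewrite -S2 -Hu S2.
  apply: Hc; rewrite S1 S2 E1 E2 E3 /coplanar3.
  set M := col_mx _ _.
  have : ~~ row_free M.
    by rewrite row_free_unit unitmxE unitfE /M detcross D0 mul0r eqxx.
  rewrite /row_free => H3; have := rank_leq_row M.
  by rewrite leq_eqVlt (negbTE H3).
exists (crossp u1 u2 + crossp u2 u0 + crossp u0 u1), (dotp u0 (crossp u1 u2)).
split.
  apply/eqP => N0; move: (key0 u0 u1 u2); rewrite N0 dotp0 => /esym /eqP.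
  by rewrite (negbTE HD).
case=> [[|[|[|[|[|n]]]]] Hk] //.
- have -> : Ordinal Hk = inord 0 by apply: val_inj; rewrite /= inordK.
  exact: key0.
- have -> : Ordinal Hk = inord 1 by apply: val_inj; rewrite /= inordK.
  exact: key1.
- have -> : Ordinal Hk = inord 2 by apply: val_inj; rewrite /= inordK.
  exact: key2.
- have -> : Ordinal Hk = inord 3 by apply: val_inj; rewrite /= inordK.
  apply/eqP; rewrite -subr_eq0; apply/eqP.
  by rewrite /derived (key3 u0 u1 u2 u3 u4) W dotp0r.
- have -> : Ordinal Hk = inord 4 by apply: val_inj; rewrite /= inordK.
  apply/eqP; rewrite -subr_eq0; apply/eqP.
  by rewrite /derived (key4 u0 u1 u2 u3 u4) W dotp0r.
Qed.
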